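(* Let $A$ be a group, $H\leq A$ a subgroup, and let $G:=\langle A,t\mid t^{-1}ht=h\ \ \forall h\in H\rangle$ be the special HNN extension of $A$ amalgamating $H$. Let $\mathcal{C}$ be a class of groups that contains a root class $\mathcal{R}$. Suppose that (1) $\mathcal{C}$ is closed under subgroups and finite direct products; (2) every $\mathcal{R}$-by-$\mathcal{C}$ group belongs to $\mathcal{C}$; (3) for every group in $\mathcal{C}$ there is a group in $\mathcal{R}$ of the same cardinality. Then $G$ is residually $\mathcal{C}$ if and only if $A$ is residually $\mathcal{C}$ and $H$ is closed in the pro-$\mathcal{C}$ topology of $A$.
   Context: A class of groups is a family of groups closed under isomorphism. A group $G$ is residually $\mathcal{C}$ if for every $g\in G\setminus\{e\}$ there exist $C\in\mathcal{C}$ and a surjective homomorphism $\varphi\colon G\to C$ with $\varphi(g)\neq e$. A root class is a non-trivial class $\mathcal{R}$ closed under subgroups and finite direct products satisfying the Gruenberg condition: for any chain $K\trianglelefteq H\trianglelefteq G$ with $G/H, H/K\in\mathcal{R}$ there is $L\trianglelefteq G$ with $L\subseteq K$ and $G/L\in\mathcal{R}$. A group is $\mathcal{A}$-by-$\mathcal{B}$ if it has a normal subgroup in $\mathcal{A}$ with quotient in $\mathcal{B}$. The pro-$\mathcal{C}$ topology on a group $A$ is the group topology having as a basis of neighbourhoods of the identity the family $\mathcal{B}=\{N\trianglelefteq A\mid A/N\in\mathcal{C}\}$ (the cosets of these subgroups form a basis). A subgroup $H\leq A$ is closed in it iff $H=\bigcap_{N\in\mathcal{B}}HN$, equivalently for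 every $a\in A\setminus H$ there is a surjection $\varphi\colon A\to C\in\mathcal{C}$ with $\varphi(a)\notin\varphi(H)$. *)

(* Defs.v *)
From Stdlib Require Import ProofIrrelevance.

Record group : Type := Group {
  carrier :> Type;
  gmul : carrier -> carrier -> carrier;
  gone : carrier;
  ginv : carrier -> carrier;
  gmulA : forall x y z, gmul x (gmul y z) = gmul (gmul x y) z;
  gmul1l : forall x, gmul gone x = x;
  gmulVl : forall x, gmul (ginv x) x = gone }.

Arguments gmul {g}. Arguments gone {g}. Arguments ginv {g}.

Definition is_hom (G K : group) (f : G -> K) : Prop :=
  forall x y, f (gmul x y) = gmul (f x) (f y).
Definition surj {X Y : Type} (f : X -> Y) : Prop := forall y, exists x, f x = y.
Definition inj {X Y : Type} (f : X -> Y) : Prop := forall x y, f x = f y -> x = y.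
Definition isomorphic (G K : group) : Prop :=
  exists f : G -> K, is_hom G K f /\ inj f /\ surj f.

Definition gclass := group -> Prop.
Definition iso_closed (C : gclass) : Prop :=
  forall G K, isomorphic G K -> C G -> C K.

Definition is_subgroup (G : group) (S : G -> Prop) : Prop :=
  S gone /\ (forall x y, S x -> S y -> S (gmul x y)) /\ (forall x, S x -> S (ginv x)).

Definition is_normal (G : group) (N : G -> Prop) : Prop :=
  is_subgroup G N /\ forall x g, N x -> N (gmul (gmul (ginv g) x) g).

Section Sub.
Variables (G : group) (S : G -> Prop) (HS : is_subgroup G S).
Definition sub_mul (a b : {x : G | S x}) : {x : G | S x} :=
  exist _ (gmul (proj1_sig a) (proj1_sig b))
    (proj1 (proj2 HS) _ _ (proj2_sig a) (proj2_sig b)).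
Definition sub_one : {x : G | S x} := exist _ gone (proj1 HS).
Definition sub_inv (a : {x : G | S x}) : {x : G | S x} :=
  exist _ (ginv (proj1_sig a)) (proj2 (proj2 HS) _ (proj2_sig a)).
Lemma sub_mulA : forall x y z, sub_mul x (sub_mul y z) = sub_mul (sub_mul x y) z.
Proof. intros [x ?] [y ?] [z ?]; apply subset_eq_compat; apply gmulA. Qed.
Lemma sub_mul1l : forall x, sub_mul sub_one x = x.
Proof. intros [x ?]; apply subset_eq_compat; apply gmul1l. Qed.
Lemma sub_mulVl : forall x, sub_mul (sub_inv x) x = sub_one.
Proof. intros [x ?]; apply subset_eq_compat; apply gmulVl. Qed.
Definition sub_group : group :=
  Group {x : G | S x} sub_mul sub_one sub_inv sub_mulA sub_mul1l sub_mulVl.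
End Sub.

Section Prod.
Variables G K : group.
Definition prod_mul (a b : G * K) : G * K := (gmul (fst a) (fst b), gmul (snd a) (snd b)).
Lemma prod_mulA : forall x y z, prod_mul x (prod_mul y z) = prod_mul (prod_mul x y) z.
Proof. intros [] [] []; unfold prod_mul; simpl; now rewrite !gmulA. Qed.
Lemma prod_mul1l : forall x, prod_mul (gone, gone) x = x.
Proof. intros []; unfold prod_mul; simpl; now rewrite !gmul1l. Qed.
Lemma prod_mulVl : forall x, prod_mul (ginv (fst x), ginv (snd x)) x = (gone, gone).
Proof. intros []; unfold prod_mul; simpl; now rewrite !gmulVl. Qed.
Definition prod_group : group :=
  Group (G * K) prod_mul (gone, gone) (fun x => (ginv (fst x), ginv (snd x)))
    prod_mulA prod_mul1l prod_mulVl.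
End Prod.

(* G/N belongs to C: N is the kernel of a surjective homomorphism onto a group of C *)
Definition quotient_in (C : gclass) (G : group) (N : G -> Prop) : Prop :=
  exists (Q : group) (f : G -> Q),
    C Q /\ is_hom G Q f /\ surj f /\ forall x, N x <-> f x = gone.

Definition subgroup_closed (C : gclass) : Prop :=
  forall G S (HS : is_subgroup G S), C G -> C (sub_group G S HS).
Definition product_closed (C : gclass) : Prop :=
  forall G K, C G -> C K -> C (prod_group G K).

Definition gruenberg (R : gclass) : Prop :=
  forall (G : group) (H : G -> Prop) (HH : is_normal G H)
         (K : sub_group G H (proj1 HH) -> Prop),
    is_normal (sub_group G H (proj1 HH)) K ->
    quotient_in R G H ->
    quotient_in R (sub_group G H (proj1 HH)) K ->
    exists L : G -> Prop, is_normal G L /\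
      (forall x (hx : H x), L x -> K (exist _ x hx)) /\
      (forall x, L x -> H x) /\
      quotient_in R G L.

Definition nontrivial_class (R : gclass) : Prop :=
  exists G : group, R G /\ exists x : G, x <> gone.

Definition root_class (R : gclass) : Prop :=
  nontrivial_class R /\ iso_closed R /\ subgroup_closed R /\ product_closed R /\
  gruenberg R.

Definition by_class (A B : gclass) (G : group) : Prop :=
  exists N (HN : is_normal G N), A (sub_group G N (proj1 HN)) /\ quotient_in B G N.

Definition residually (C : gclass) (G : group) : Prop :=
  forall g : G, g <> gone ->
    exists (K : group) (f : G -> K), C K /\ is_hom G K f /\ surj f /\ f g <> gone.

(* H closed in the pro-C topology: H = intersection of HN over N normal with A/N in C *)
Definition pro_closed (C : gclass) (A : group) (H : A -> Prop) : Prop :=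
  forall a : A,
    (forall N, is_normal A N -> quotient_in C A N ->
       exists h n, H h /\ N n /\ a = gmul h n) -> H a.

Definition same_card (X Y : group) : Prop :=
  exists f : X -> Y, inj f /\ surj f.

(* G with i : A -> G and t is the special HNN extension <A, t | t^-1 h t = h, h in H>,
   characterised by its universal property (determines G up to isomorphism). *)
Definition is_special_HNN (A : group) (H : A -> Prop) (G : group) (i : A -> G) (t : G)
  : Prop :=
  is_hom A G i /\
  (forall h, H h -> gmul (gmul (ginv t) (i h)) t = i h) /\
  (forall (K : group) (f : A -> K) (s : K),
     is_hom A K f -> (forall h, H h -> gmul (gmul (ginv s) (f h)) s = f h) ->
     exists phi : G -> K, is_hom G K phi /\ (forall a, phi (i a) = f a) /\ phi t = s) /\
  (forall (K : group) (phi psi : G -> K), is_hom G K phi -> is_hom G K psi ->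
     (forall a, phi (i a) = psi (i a)) -> phi t = psi t -> forall g, phi g = psi g).

(* Main.v *)
Require Import Defs.
From Stdlib Require Import ProofIrrelevance FunctionalExtensionality ClassicalEpsilon Classical Bool List Lia PeanoNat PropExtensionality.
Import ListNotations.


Section GL.
Variable G : group.
Lemma gmulV (x : G) : gmul x (ginv x) = gone.
Proof.
  rewrite <- (gmul1l _ (gmul x (ginv x))).
  rewrite <- (gmulVl _ (ginv x)) at 1.
  rewrite <- gmulA, (gmulA _ (ginv x) x (ginv x)), gmulVl, gmul1l. apply gmulVl.
Qed.
Lemma gmul1r (x : G) : gmul x gone = x.
Proof. rewrite <- (gmulVl _ x), gmulA, gmulV, gmul1l. reflexivity. Qed.
Lemma ginvK (x : G) : ginv (ginv x) = x.
Proof.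
  rewrite <- (gmul1r (ginv (ginv x))), <- (gmulVl _ x), gmulA, gmulVl, gmul1l. reflexivity.
Qed.
Lemma ginv1 : ginv (@gone G) = gone.
Proof. rewrite <- (gmul1r (ginv gone)). apply gmulVl. Qed.
Lemma inv_uniq (a b : G) : gmul a b = gone -> a = ginv b.
Proof. intros E. rewrite <- (gmul1r a), <- (gmulV b), gmulA, E, gmul1l. reflexivity. Qed.
Lemma ginvM (x y : G) : ginv (gmul x y) = gmul (ginv y) (ginv x).
Proof.
  symmetry. apply inv_uniq. rewrite <- gmulA, (gmulA _ (ginv x)), gmulVl, gmul1l, gmulVl. reflexivity.
Qed.
Lemma mul_eq1 (x y : G) : gmul x (ginv y) = gone -> x = y.
Proof. intros E. rewrite <- (gmul1r x), <- (gmulVl _ y), gmulA, E, gmul1l. reflexivity. Qed.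
End GL.

Lemma idem1 (K : group) (x : K) : gmul x x = x -> x = gone.
Proof. intros E. transitivity (gmul (ginv x) (gmul x x)).
  - rewrite gmulA, gmulVl, gmul1l. reflexivity.
  - rewrite E. apply gmulVl. Qed.
Lemma hom1 G K f : is_hom G K f -> f gone = gone.
Proof. intros Hf. apply idem1. rewrite <- Hf, gmul1l. reflexivity. Qed.
Lemma homV G K f : is_hom G K f -> forall x, f (ginv x) = ginv (f x).
Proof. intros Hf x. apply mul_eq1. rewrite ginvK.
  rewrite <- Hf, gmulVl. apply (hom1 _ _ _ Hf). Qed.

Definition img {G K : group} (f : G -> K) : K -> Prop := fun k => exists a, f a = k.
Lemma img_sub G K f : is_hom G K f -> is_subgroup K (img f).
Proof. intros Hf. split; [|split].
  - exists gone. apply (hom1 _ _ _ Hf).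
  - intros x y [a <-] [b <-]. exists (gmul a b). apply Hf.
  - intros x [a <-]. exists (ginv a). apply (homV _ _ _ Hf).
Qed.

Lemma image_in (C : gclass) G K f (Hf : is_hom G K f) :
  subgroup_closed C -> C K ->
  exists (Q : group) (q : G -> Q), C Q /\ is_hom G Q q /\ surj q /\
     forall x, q x = gone <-> f x = gone.
Proof.
  intros SC CK. exists (sub_group K (img f) (img_sub _ _ _ Hf)).
  exists (fun a => exist _ (f a) (ex_intro _ a eq_refl)).
  split; [apply SC; exact CK|split; [|split]].
  - intros x y. apply subset_eq_compat. apply Hf.
  - intros [k [a E]]. exists a. apply subset_eq_compat. exact E.
  - intros x; split; intro E.
    + apply (f_equal (@proj1_sig _ _)) in E. exact E.
    + apply subset_eq_compat. exact E.
Qed.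

Section W.
Variable A : group.
Definition Wmul (p q : (A -> bool) * A) : (A -> bool) * A :=
  (fun x => xorb (fst p x) (fst q (gmul (ginv (snd p)) x)), gmul (snd p) (snd q)).
Definition Wone : (A -> bool) * A := (fun _ => false, gone).
Definition Winv (p : (A -> bool) * A) : (A -> bool) * A :=
  (fun x => fst p (gmul (snd p) x), ginv (snd p)).
Lemma WmulA x y z : Wmul x (Wmul y z) = Wmul (Wmul x y) z.
Proof. destruct x as [F a], y as [G b], z as [K c]; unfold Wmul; simpl.
  f_equal; [|apply gmulA]. apply functional_extensionality; intro x.
  rewrite xorb_assoc, ginvM, gmulA. reflexivity. Qed.
Lemma Wmul1l x : Wmul Wone x = x.
Proof. destruct x as [F a]; unfold Wmul; simpl. rewrite gmul1l. f_equal.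
  apply functional_extensionality; intro x. rewrite ginv1, gmul1l. reflexivity. Qed.
Lemma WmulVl x : Wmul (Winv x) x = Wone.
Proof. destruct x as [F a]; unfold Wmul, Winv, Wone; simpl. rewrite gmulVl. f_equal.
  apply functional_extensionality; intro x. rewrite ginvK, xorb_nilpotent. reflexivity. Qed.
Definition Wgroup : group := Group ((A -> bool) * A) Wmul Wone Winv WmulA Wmul1l WmulVl.
End W.

Definition chi {A : group} (H : A -> Prop) (x : A) : bool :=
  if excluded_middle_informative (H x) then true else false.

Lemma forward (C : gclass) (A : group) (H : A -> Prop) (G : group)
  (i : A -> G) (t : G) :
  is_subgroup A H ->
  is_special_HNN A H G i t ->
  subgroup_closed C ->
  residually C G -> residually C A /\ pro_closed C A H.
Proof.
  intros HH [Hi [Ht [UP UQ]]] SC RG.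
  destruct (UP A (fun a => a) gone) as [r [Hr [Hri _]]].
  { intros x y; reflexivity. }
  { intros h _. rewrite ginv1, gmul1l, gmul1r. reflexivity. }
  split.
  - intros a Ha.
    destruct (RG (i a)) as [K [f [CK [Hf [Sf Nf]]]]].
    { intro E. apply Ha. rewrite <- (Hri a), E. apply (hom1 _ _ _ Hr). }
    exists (sub_group K (img (fun x => f (i x)))
      (img_sub _ _ _ (fun x y => eq_trans (f_equal f (Hi x y)) (Hf _ _)))).
    exists (fun a => exist _ (f (i a)) (ex_intro _ a eq_refl)).
    split; [apply SC; exact CK|split; [|split]].
    + intros x y. apply subset_eq_compat. rewrite Hi. apply Hf.
    + intros [k [b E]]. exists b. apply subset_eq_compat. exact E.
    + intro E. apply (f_equal (@proj1_sig _ _)) in E. exact (Nf E).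
  - intros a Ha. apply NNPP; intro Na.
    set (s := (chi H, @gone A) : Wgroup A).
    destruct (UP (Wgroup A) (fun a => (fun _ => false, a) : Wgroup A) s) as [phi [Hphi [Hpi Hpt]]].
    { intros x y. reflexivity. }
    { intros h Hh. simpl. unfold Wmul, Winv; simpl. f_equal.
      - apply functional_extensionality; intro x.
        rewrite !ginv1, !gmul1l, xorb_false_r.
        unfold chi. destruct (excluded_middle_informative (H x)) as [Hx|Hx];
        destruct (excluded_middle_informative (H (gmul (ginv h) x))) as [Hy|Hy]; try reflexivity.
        + exfalso. apply Hy. apply HH; [apply HH; exact Hh| exact Hx].
        + exfalso. apply Hx. replace x with (gmul h (gmul (ginv h) x)).
          * apply HH; assumption.
          * rewrite gmulA, gmulV, gmul1l. reflexivity.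
      - rewrite ginv1, gmul1l, gmul1r. reflexivity. }
    assert (Ncomm : gmul t (i a) <> gmul (i a) t).
    { intro E. apply (f_equal phi) in E. rewrite !Hphi, Hpi, Hpt in E.
      unfold s in E; simpl in E; unfold Wmul in E; simpl in E.
      apply (f_equal (fun p => fst p a)) in E; simpl in E.
      rewrite xorb_false_r, gmulVl in E. unfold chi in E.
      destruct (excluded_middle_informative (H a)); [contradiction|].
      destruct (excluded_middle_informative (H gone)) as [|n1]; [discriminate|].
      apply n1, HH. }
    destruct (RG (gmul (gmul t (i a)) (ginv (gmul (i a) t)))) as [Q [q [CQ [Hq [Sq Nq]]]]].
    { intro E. apply Ncomm. apply mul_eq1. exact E. }
    assert (Hqi : is_hom A Q (fun x => q (i x))).
    { intros x y. rewrite Hi. apply Hq. }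
    destruct (Ha (fun x => q (i x) = gone)) as [h [n [Hh [Nn Ea]]]].
    + split; [split; [|split]|].
      * apply (hom1 _ _ _ Hqi).
      * intros x y Ex Ey. rewrite Hqi, Ex, Ey. apply gmul1l.
      * intros x Ex. rewrite (homV _ _ _ Hqi), Ex. apply ginv1.
      * intros x g Ex. rewrite !Hqi, Ex, gmul1r, <- Hqi, gmulVl. apply (hom1 _ _ _ Hqi).
    + destruct (image_in C A Q _ Hqi SC CQ) as [Q' [q' [C' [H' [S' K']]]]].
      exists Q', q'. split; [exact C'|split; [exact H'|split; [exact S'|]]].
      intro x. symmetry. apply K'.
    + apply Nq. rewrite Hq, (homV _ _ _ Hq), !Hq.
      assert (Eqa : q (i a) = q (i h)).
      { rewrite Ea, Hi, Hq, Nn, gmul1r. reflexivity. }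
      assert (Ch : gmul (i h) t = gmul t (i h)).
      { rewrite <- (Ht h Hh) at 2. rewrite !gmulA, gmulV, gmul1l. reflexivity. }
      apply (f_equal q) in Ch. rewrite !Hq in Ch.
      rewrite Eqa, <- Ch. apply gmulV.
Qed.


Section WR.
Variables B Q : group.
Definition WRmul (p q : (Q -> B) * Q) : (Q -> B) * Q :=
  (fun x => gmul (fst p x) (fst q (gmul (ginv (snd p)) x)), gmul (snd p) (snd q)).
Definition WRone : (Q -> B) * Q := (fun _ => gone, gone).
Definition WRinv (p : (Q -> B) * Q) : (Q -> B) * Q :=
  (fun x => ginv (fst p (gmul (snd p) x)), ginv (snd p)).
Lemma WRmulA x y z : WRmul x (WRmul y z) = WRmul (WRmul x y) z.
Proof. destruct x as [F a], y as [G b], z as [K c]; unfold WRmul; simpl.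
  f_equal; [|apply gmulA]. apply functional_extensionality; intro x.
  rewrite gmulA, ginvM, gmulA. reflexivity. Qed.
Lemma WRmul1l x : WRmul WRone x = x.
Proof. destruct x as [F a]; unfold WRmul; simpl. rewrite gmul1l. f_equal.
  apply functional_extensionality; intro x. rewrite ginv1, !gmul1l. reflexivity. Qed.
Lemma WRmulVl x : WRmul (WRinv x) x = WRone.
Proof. destruct x as [F a]; unfold WRmul, WRinv, WRone; simpl. rewrite gmulVl. f_equal.
  apply functional_extensionality; intro x. rewrite ginvK, gmulVl. reflexivity. Qed.
Definition WR : group := Group ((Q -> B) * Q) WRmul WRone WRinv WRmulA WRmul1l WRmulVl.

Inductive gen := GQ (q : Q) | GS (s : bool).
Variable sigma : Q -> B.
Definition ssig : WR := (sigma, gone).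
Definition evK1 (x : gen) : WR :=
  match x with GQ q => (fun _ => gone, q) | GS s => if s then ssig else ginv ssig end.
Definition evK (l : list gen) : WR := fold_right (fun x acc => gmul (evK1 x) acc) gone l.
Fixpoint walk (p : Q) (l : list gen) : list (Q * bool) :=
  match l with
  | [] => []
  | GQ q :: r => walk (gmul p q) r
  | GS s :: r => (p, s) :: walk p r
  end.
Fixpoint Qpart (l : list gen) : Q :=
  match l with [] => gone | GQ q :: r => gmul q (Qpart r) | GS _ :: r => Qpart r end.
End WR.

Arguments GQ {Q}. Arguments GS {Q}.

Definition sig_ev {T} {B : group} (beta : T -> B) (p : T * bool) : B :=
  if snd p then beta (fst p) else ginv (beta (fst p)).
Definition evw {T} {B : group} (beta : T -> B) (w : list (T * bool)) : B :=
  fold_right (fun p acc => gmul (sig_ev beta p) acc) gone w.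

Lemma evK_cons B Q sigma x r : evK B Q sigma (x :: r) = WRmul B Q (evK1 B Q sigma x) (evK B Q sigma r).
Proof. reflexivity. Qed.

Lemma walk_ev (B Q : group) (sigma : Q -> B) : forall l (p : Q) (F0 : Q -> B),
  WRmul B Q (F0, p) (evK B Q sigma l) =
  (fun x => gmul (F0 x) (evw (fun q => sigma (gmul (ginv q) x)) (walk Q p l)),
   gmul p (Qpart Q l)).
Proof.
  induction l as [|[q|s] r IH]; intros p F0.
  - reflexivity.
  - rewrite evK_cons.
    rewrite WRmulA. simpl. unfold WRmul at 2; simpl.
    replace (fun x => gmul (F0 x) gone) with F0 by (apply functional_extensionality; intro; symmetry; apply gmul1r).
    rewrite IH, gmulA. reflexivity.
  - rewrite evK_cons.
    rewrite WRmulA. simpl walk. simpl Qpart.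
    destruct s; simpl; unfold WRmul at 2; simpl; unfold ssig, WRinv; simpl;
      rewrite ?ginv1, ?gmul1r; rewrite IH; f_equal; apply functional_extensionality; intro x;
      unfold sig_ev; simpl; rewrite ?gmul1l, gmulA; reflexivity.
Qed.


Lemma iso_inv (G K : group) (f : G -> K) : is_hom G K f -> inj f -> surj f -> isomorphic K G.
Proof.
  intros Hf If Sf.
  set (g := fun y => proj1_sig (constructive_indefinite_description _ (Sf y))).
  assert (Hg : forall y, f (g y) = y).
  { intro y. unfold g. destruct (constructive_indefinite_description _ (Sf y)); assumption. }
  exists g. split; [|split].
  - intros x y. apply If. rewrite Hf, !Hg. reflexivity.
  - intros x y E. rewrite <- (Hg x), <- (Hg y), E. reflexivity.
  - intros x. exists (f x). apply If. apply Hg.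
Qed.

Lemma kernel_triv_inj (G K : group) (f : G -> K) : is_hom G K f ->
  (forall x, f x = gone -> x = gone) -> inj f.
Proof.
  intros Hf Hk x y E. apply mul_eq1. apply Hk. rewrite Hf, (homV _ _ _ Hf), E. apply gmulV.
Qed.

Lemma root_wr (R : gclass) (B Z : group) : root_class R -> R B -> R Z -> R (WR B Z).
Proof.
  intros [_ [IR [_ [_ GR]]]] RB RZ.
  set (G := WR B Z).
  set (Hb := fun p : G => snd p = gone).
  assert (HHb : is_normal G Hb).
  { split; [split; [|split]|].
    - reflexivity.
    - intros x y Ex Ey. unfold Hb in *. simpl. unfold WRmul; simpl. rewrite Ex, Ey. apply gmul1l.
    - intros x Ex. unfold Hb in *. simpl. unfold WRinv; simpl. rewrite Ex. apply ginv1.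
    - intros x g Ex. unfold Hb in *. simpl. unfold WRmul, WRinv; simpl. rewrite Ex, gmul1r. apply gmulVl. }
  set (Kb := fun q : sub_group G Hb (proj1 HHb) => fst (proj1_sig q) gone = gone).
  assert (evhom : forall (x y : sub_group G Hb (proj1 HHb)),
     fst (proj1_sig (gmul x y)) gone = gmul (fst (proj1_sig x) gone) (fst (proj1_sig y) gone)).
  { intros [[F a] ha] [[F' b] hb]. unfold Hb in ha, hb. simpl in ha, hb. subst.
    simpl. unfold WRmul; simpl. rewrite ginv1, gmul1l. reflexivity. }
  assert (HKb : is_normal _ Kb).
  { split; [split; [|split]|].
    - reflexivity.
    - intros x y Ex Ey. unfold Kb in *. rewrite evhom, Ex, Ey. apply gmul1l.
    - intros [[F a] ha] Ex. unfold Kb in *. unfold Hb in ha. simpl in *. unfold WRinv; simpl.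
      rewrite ha, gmul1l, Ex. apply ginv1.
    - intros x g Ex. unfold Kb in *. rewrite !evhom, Ex, gmul1r.
      destruct g as [[F a] ha]. unfold Hb in ha. simpl in *. unfold WRinv; simpl.
      rewrite ha, gmul1l. apply gmulVl. }
  destruct (GR G Hb HHb Kb HKb) as [L [HL [LK [LH QL]]]].
  - exists Z, snd. split; [exact RZ|split; [|split]].
    + intros x y. reflexivity.
    + intros z. exists ((fun _ => gone), z). reflexivity.
    + intros x. reflexivity.
  - exists B, (fun q => fst (proj1_sig q) gone). split; [exact RB|split; [|split]].
    + exact evhom.
    + intros b. unshelve eexists (exist _ ((fun _ => b), gone) _). reflexivity. reflexivity.
    + intros x. reflexivity.
  - destruct QL as [Q' [f [RQ [Hf [Sf Kf]]]]].
    assert (Ltriv : forall x, L x -> x = gone).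
    { intros [F a] Lx. assert (Ha : a = gone) by exact (LH _ Lx). subst a.
      simpl. unfold WRone. f_equal. apply functional_extensionality; intro z.
      assert (Lc := proj2 HL (F, gone) (fun _ => gone, z) Lx).
      specialize (LK _ (LH _ Lc) Lc). unfold Kb in LK. simpl in LK.
      unfold WRmul, WRinv in LK; simpl in LK.
      rewrite !ginv1, !gmul1l, !gmul1r, ginvK in LK. exact LK. }
    apply (IR Q' G); [|exact RQ].
    apply (iso_inv G Q' f Hf); [|exact Sf].
    apply kernel_triv_inj; [exact Hf|]. intros x Ex. apply Ltriv. apply Kf. exact Ex.
Qed.


Definition base (B X : group) : WR B X -> Prop := fun p => snd p = gone.
Lemma base_normal B X : is_normal (WR B X) (base B X).
Proof.
  split; [split; [|split]|].
  - reflexivity.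
  - intros x y Ex Ey. unfold base in *. simpl. unfold WRmul; simpl. rewrite Ex, Ey. apply gmul1l.
  - intros x Ex. unfold base in *. simpl. unfold WRinv; simpl. rewrite Ex. apply ginv1.
  - intros x g Ex. unfold base in *. simpl. unfold WRmul, WRinv; simpl. rewrite Ex, gmul1r. apply gmulVl.
Qed.

Lemma base_iso (B X Z : group) (e : X -> Z) : inj e -> surj e ->
  isomorphic (sub_group (WR B Z) (base B Z) (proj1 (base_normal B Z)))
             (sub_group (WR B X) (base B X) (proj1 (base_normal B X))).
Proof.
  intros Ie Se.
  set (einv := fun z => proj1_sig (constructive_indefinite_description _ (Se z))).
  assert (He : forall z, e (einv z) = z).
  { intro z. unfold einv. destruct (constructive_indefinite_description _ (Se z)); assumption. }
  exists (fun p => exist (base B X) ((fun x => fst (proj1_sig p) (e x)), gone) eq_refl).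
  split; [|split].
  - intros [[F a] ha] [[F' b] hb]. unfold base in ha, hb; simpl in ha, hb; subst.
    apply subset_eq_compat. simpl. unfold WRmul; simpl. rewrite !ginv1, gmul1l.
    f_equal. apply functional_extensionality; intro x. rewrite !gmul1l. reflexivity.
  - intros [[F a] ha] [[F' b] hb] E. unfold base in ha, hb; simpl in ha, hb; subst.
    apply subset_eq_compat. apply (f_equal (fun p => fst (proj1_sig p))) in E. simpl in E.
    f_equal. apply functional_extensionality; intro z. rewrite <- (He z).
    exact (f_equal (fun h => h (einv z)) E).
  - intros [[F' a] ha]. unfold base in ha; simpl in ha; subst.
    exists (exist (base B Z) ((fun z => F' (einv z)), gone) eq_refl).
    apply subset_eq_compat. simpl. f_equal. apply functional_extensionality; intro x.
    f_equal. apply Ie. apply He.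
Qed.

Lemma wr_in_C (C R : gclass) (B X : group) :
  root_class R ->
  (forall X, by_class R C X -> C X) ->
  (forall X, C X -> exists Y, R Y /\ same_card X Y) ->
  R B -> C X -> C (WR B X).
Proof.
  intros RR BC CARD RB CX.
  destruct (CARD X CX) as [Z [RZ [e [Ie Se]]]].
  apply BC. exists (base B X), (base_normal B X). split.
  - pose proof RR as RR'. destruct RR' as [_ [IR [SR _]]].
    apply (IR _ _ (base_iso B X Z e Ie Se)). apply SR. apply root_wr; auto.
  - exists X, snd. split; [exact CX|split; [|split]].
    + intros x y. reflexivity.
    + intros z. exists ((fun _ => gone), z). reflexivity.
    + intros x. reflexivity.
Qed.


Fixpoint gpow {G : group} (b : G) (n : nat) : G :=
  match n with 0 => gone | S n => gmul b (gpow b n) end.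
Lemma gpow_add (G : group) (b : G) i j : gpow b (i + j) = gmul (gpow b i) (gpow b j).
Proof. induction i; simpl. - rewrite gmul1l; reflexivity. - rewrite IHi, gmulA; reflexivity. Qed.
Lemma gpow_Sr (G : group) (b : G) n : gpow b (S n) = gmul (gpow b n) b.
Proof. replace (S n) with (n + 1) by lia. rewrite gpow_add. simpl. rewrite gmul1r. reflexivity. Qed.
Lemma gpow_hom (G K : group) (f : G -> K) (b : G) n : is_hom G K f -> f (gpow b n) = gpow (f b) n.
Proof. intros Hf. induction n; simpl. - apply (hom1 _ _ _ Hf). - rewrite Hf, IHn; reflexivity. Qed.

Definition ord_ge (B : group) (b : B) N := forall j, 1 <= j <= N -> gpow b j <> gone.

Lemma ord_double (B : group) (b : B) N : ord_ge B b N ->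
  exists w : WR B B, ord_ge (WR B B) w (2 * N).
Proof.
  intros Ob.
  set (delta := fun y : B => if excluded_middle_informative (y = gone) then b else gone).
  set (w := (delta, b) : WR B B).
  assert (Hsnd : forall j, snd (gpow w j) = gpow b j).
  { intro j. apply (gpow_hom (WR B B) B snd w j). intros x y; reflexivity. }
  assert (Hfst : forall j, 1 <= j -> (forall i, 0 < i < j -> gpow b i <> gone) ->
            fst (gpow w j) gone = b).
  { induction j as [|j IH]; intros Hj Hi; [lia|].
    rewrite gpow_Sr. simpl fst. unfold WRmul. simpl fst. rewrite Hsnd, gmul1r.
    destruct j as [|j].
    - simpl. unfold delta. rewrite ginv1, gmul1l.
      destruct (excluded_middle_informative (gone = gone)); [|congruence]. reflexivity.
    - rewrite IH; [|lia|intros i Hi'; apply Hi; lia].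
      unfold delta. destruct (excluded_middle_informative (ginv (gpow b (S j)) = gone)) as [E|E].
      + exfalso. apply (Hi (S j)); [lia|]. rewrite <- (ginvK _ (gpow b (S j))), E. apply ginv1.
      + apply gmul1r. }
  exists w. intros j Hj E.
  destruct (classic (gpow b j = gone)) as [Ej|Ej].
  - assert (Hi : forall i, 0 < i < j -> gpow b i <> gone).
    { intros i Hi Ei. destruct (Nat.le_gt_cases i N).
      - apply (Ob i); [lia|exact Ei].
      - apply (Ob (j - i)); [|].
        + split; [lia|]. destruct (Nat.le_gt_cases j N); [exfalso; apply (Ob j); [lia|exact Ej]|lia].
        + replace j with (i + (j - i)) in Ej by lia. rewrite gpow_add, Ei, gmul1l in Ej. exact Ej. }
    assert (F1 := Hfst j (proj1 Hj) Hi). rewrite E in F1. simpl in F1.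
    destruct (Nat.le_gt_cases 1 N) as [HN|HN]; [|lia].
    apply (Ob 1); [lia|]. simpl. rewrite gmul1r. symmetry. exact F1.
  - apply Ej. rewrite <- Hsnd, E. reflexivity.
Qed.

Lemma ord_any (R : gclass) : root_class R -> forall n, exists B, R B /\ exists b : B, ord_ge B b n.
Proof.
  intros RR.
  assert (P2 : forall k, exists B, R B /\ exists b : B, ord_ge B b (2 ^ k)).
  { induction k.
    - destruct RR as [[B [RB [x Hx]]] _]. exists B. split; [exact RB|]. exists x.
      intros j Hj. simpl in Hj. replace j with 1 by lia. simpl. rewrite gmul1r. exact Hx.
    - destruct IHk as [B [RB [b Ob]]]. destruct (ord_double B b _ Ob) as [w Ow].
      exists (WR B B). split; [apply root_wr; auto|]. exists w. simpl. replace (2 ^ k + (2 ^ k + 0)) with (2 * 2 ^ k) by lia. exact Ow. }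
  intros n. destruct (P2 n) as [B [RB [b Ob]]]. exists B. split; [exact RB|]. exists b.
  intros j Hj. apply Ob. split; [lia|]. assert (n < 2 ^ n) by (apply Nat.pow_gt_lin_r; lia). lia.
Qed.


Definition cancel {T} (x y : T * bool) := fst x = fst y /\ snd y = negb (snd x).
Fixpoint red {T} (w : list (T * bool)) : Prop :=
  match w with x :: ((y :: _) as r) => ~ cancel x y /\ red r | _ => True end.

Lemma red_tail {T} (x : T * bool) r : red (x :: r) -> red r.
Proof. destruct r; simpl; tauto. Qed.
Lemma red_app_l {T} (a l : list (T * bool)) : red (a ++ l) -> red l.
Proof. induction a; simpl; auto. intro H. apply IHa. eapply red_tail; eauto. Qed.
Lemma red_app_r {T} (l b : list (T * bool)) : red (l ++ b) -> red l.
Proof. induction l as [|x l IH]; simpl; auto. destruct l as [|y l]; simpl; auto.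
  intros [H1 H2]. split; [exact H1|apply IH; exact H2]. Qed.

Fixpoint prefixes {X} (l : list X) : list (list X) :=
  match l with [] => [[]] | x :: r => [] :: map (cons x) (prefixes r) end.
Fixpoint infixes {X} (l : list X) : list (list X) :=
  match l with [] => [[]] | x :: r => prefixes (x :: r) ++ infixes r end.
Lemma in_prefixes {X} (u b : list X) : In u (prefixes (u ++ b)).
Proof. induction u; simpl. - destruct b; simpl; auto. - right. apply in_map. auto. Qed.
Lemma in_infixes {X} (a u b : list X) : In u (infixes (a ++ u ++ b)).
Proof.
  induction a as [|x a IH]; simpl.
  - destruct (u ++ b) as [|y r] eqn:E.
    + apply app_eq_nil in E. destruct E; subst. simpl. auto.
    + rewrite <- E. destruct u as [|z u]; simpl in *. * rewrite E. simpl. auto. * right. apply in_or_app. left.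
      apply in_map. apply in_prefixes.
  - right. apply in_or_app. right. exact IH.
Qed.

Lemma evw_prod {T} (B1 B2 : group) (b1 : T -> B1) (b2 : T -> B2) w :
  @evw T (prod_group B1 B2) (fun l => (b1 l, b2 l)) w = (evw b1 w, evw b2 w).
Proof. induction w as [|[l s] w IH]; simpl. - reflexivity.
  - rewrite IH. unfold sig_ev; destruct s; reflexivity. Qed.

Lemma sep_list (R : gclass) (RR : root_class R) T (P : list (T * bool) -> Prop) ws :
  (forall u, In u ws -> P u -> exists B, R B /\ exists beta : T -> B, evw beta u <> gone) ->
  exists B, R B /\ exists beta : T -> B, forall u, In u ws -> P u -> evw beta u <> gone.
Proof.
  induction ws as [|u ws IH]; intros Hs.
  - destruct RR as [[B [RB _]] _]. exists B. split; [exact RB|]. exists (fun _ => gone).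
    intros u [].
  - destruct IH as [B1 [R1 [b1 H1]]]. { intros v Hv. apply Hs. right. exact Hv. }
    destruct (classic (P u)) as [Pu|Pu].
    + destruct (Hs u (or_introl eq_refl) Pu) as [B2 [R2 [b2 H2]]].
      exists (prod_group B1 B2). split. { destruct RR as [_ [_ [_ [PR _]]]]. apply PR; auto. }
      exists (fun l => (b1 l, b2 l)). intros v Hv Pv. rewrite evw_prod. intro E.
      injection E as E1 E2. destruct Hv as [<-|Hv].
      * exact (H2 E2).
      * exact (H1 v Hv Pv E1).
    + exists B1. split; [exact R1|]. exists b1. intros v [<-|Hv] Pv; [contradiction|].
      exact (H1 v Hv Pv).
Qed.

Lemma evw_ext {T} (B : group) (f g : T -> B) w : (forall x, f x = g x) -> evw f w = evw g w.
Proof. intro E. replace f with g; [reflexivity|]. symmetry. apply functional_extensionality. exact E. Qed.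

Section FLstep.
Variables (T : Type) (c : T) (Q : group) (alpha : T -> Q).
Definition tr (x : T * bool) : gen Q :=
  if excluded_middle_informative (fst x = c) then GS (snd x) else GQ (sig_ev alpha x).

Lemma tr_c l s : l = c -> tr (l, s) = GS s.
Proof. intro E. unfold tr. simpl. destruct (excluded_middle_informative (l = c)); [reflexivity|contradiction]. Qed.
Lemma tr_nc l s : l <> c -> tr (l, s) = GQ (sig_ev alpha (l, s)).
Proof. intro E. unfold tr. simpl. destruct (excluded_middle_informative (l = c)); [contradiction|reflexivity]. Qed.

Lemma walk_len : forall w (p : Q), length (walk Q p (map tr w)) <= length w /\
  ((exists x, In x w /\ fst x <> c) -> length (walk Q p (map tr w)) < length w).
Proof.
  induction w as [|[l s] r IH]; intros p; simpl.
  - split; [lia|]. intros [x [[] _]].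
  - destruct (excluded_middle_informative (l = c)) as [E|E]; [rewrite tr_c|rewrite tr_nc]; auto; simpl.
    + destruct (IH p) as [I1 I2]. split; [lia|]. intros [x [[<-|Hx] Hn]]; [simpl in Hn; contradiction|].
      assert (length (walk Q p (map tr r)) < length r) by (apply I2; exists x; auto). lia.
    + destruct (IH (gmul p (sig_ev alpha (l, s)))) as [I1 I2]. split; lia.
Qed.

Lemma pmul_eq (p x : Q) : p = gmul p x -> x = gone.
Proof. intro E. rewrite <- (gmul1l _ x), <- (gmulVl _ p), <- gmulA, <- E. reflexivity. Qed.

Lemma walk_red : forall w (p : Q), red w ->
  (forall a u b, w = a ++ u ++ b -> u <> [] -> (forall x, In x u -> fst x <> c) -> evw alpha u <> gone) ->
  red (walk Q p (map tr w)) /\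
  (forall q s' rest, walk Q p (map tr w) = (q, s') :: rest ->
     exists u r', w = u ++ (c, s') :: r' /\ (forall x, In x u -> fst x <> c) /\ q = gmul p (evw alpha u)).
Proof.
  induction w as [|[l s] r IH]; intros p Rw Sw.
  - simpl. split; [exact I|]. intros; discriminate.
  - assert (Rr : red r) by (eapply red_tail; eauto).
    assert (Sr : forall a u b, r = a ++ u ++ b -> u <> [] -> (forall x, In x u -> fst x <> c) ->
                 evw alpha u <> gone).
    { intros a u b E. apply (Sw ((l,s)::a) u b). rewrite E. reflexivity. }
    simpl map.
    destruct (excluded_middle_informative (l = c)) as [El|El]; [rewrite tr_c|rewrite tr_nc]; auto.
    + subst l. simpl walk. destruct (IH p Rr Sr) as [IR IHd]. split.
      * destruct (walk Q p (map tr r)) as [|[q s'] rest] eqn:Ew; [exact I|].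
        split; [|exact IR].
        destruct (IHd q s' rest eq_refl) as [u [r' [Er [Nu Eq]]]].
        intros [Cq Cs]. simpl in Cq, Cs.
        destruct u as [|x u].
        -- simpl in Er. subst r. simpl in Rw. destruct Rw as [Nc _]. apply Nc. split; simpl; auto.
        -- apply (Sw [(c,s)] (x::u) ((c,s')::r')); [simpl; rewrite Er; reflexivity|discriminate|exact Nu|].
           apply (pmul_eq p). rewrite <- Eq. exact Cq.
      * intros q s' rest E. injection E as E1 E2 E3. subst. exists [], r. simpl.
        split; [reflexivity|split; [intros x []|symmetry; apply gmul1r]].
    + simpl walk. destruct (IH (gmul p (sig_ev alpha (l, s))) Rr Sr) as [IR IHd]. split; [exact IR|].
      intros q s' rest E. destruct (IHd q s' rest E) as [u [r' [Er [Nu Eq]]]].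
      exists ((l,s)::u), r'. split; [simpl; rewrite Er; reflexivity|split].
      * intros x [<-|Hx]; [exact El|exact (Nu x Hx)].
      * rewrite Eq. simpl. apply eq_sym, gmulA.
Qed.
End FLstep.


Lemma all_same {T} : forall w1 (x : T * bool), red (x :: w1) ->
  (forall y, In y (x :: w1) -> fst y = fst x) -> forall y, In y (x :: w1) -> y = x.
Proof.
  induction w1 as [|z w1 IH]; intros x Rw Hf y Hy.
  - destruct Hy as [<-|[]]; reflexivity.
  - simpl in Rw. destruct Rw as [Nc Rr].
    assert (Ez : z = x).
    { destruct z as [zl zs], x as [xl xs]. assert (zl = xl) by (apply (Hf (zl,zs)); simpl; auto).
      subst. f_equal. destruct xs, zs; simpl in *; auto; exfalso; apply Nc; split; reflexivity. }
    subst z. destruct Hy as [<-|Hy]; [reflexivity|]. apply (IH x Rr); [|exact Hy].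
    intros y' Hy'. apply Hf. right. exact Hy'.
Qed.

Lemma evw_const {T} (B : group) (beta : T -> B) b w :
  (forall y, In y w -> sig_ev beta y = b) -> evw beta w = gpow b (length w).
Proof. induction w as [|y w IH]; intro H; simpl; [reflexivity|].
  rewrite H by (left; reflexivity). rewrite IH; [reflexivity|]. intros; apply H; right; auto. Qed.


Lemma evK_tr T c (B Q : group) (alpha : T -> Q) (sigma : Q -> B) w :
  evw (fun l => if excluded_middle_informative (l = c) then ssig B Q sigma
               else ((fun _ => gone), alpha l) : WR B Q) w
  = evK B Q sigma (map (tr T c Q alpha) w).
Proof.
  induction w as [|[l s] w IH]; [reflexivity|].
  simpl map. rewrite evK_cons. simpl evw. f_equal; [|exact IH].
  unfold sig_ev at 1. simpl.
  destruct (excluded_middle_informative (l = c)) as [E|E].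
  - rewrite tr_c by exact E. destruct s; reflexivity.
  - rewrite tr_nc by exact E. destruct s; simpl; unfold sig_ev; simpl; [reflexivity|].
    unfold WRinv. simpl. f_equal. apply functional_extensionality; intro; apply ginv1.
Qed.

Lemma evK_fst1 (B Q : group) (sigma : Q -> B) l :
  fst (evK B Q sigma l) gone = evw (fun q => sigma (gmul (ginv q) gone)) (walk Q gone l).
Proof.
  rewrite <- (WRmul1l B Q (evK B Q sigma l)). unfold WRone. rewrite walk_ev. simpl. apply gmul1l.
Qed.

Lemma FL (R : gclass) (RR : root_class R) : forall n T (w : list (T * bool)),
  length w <= n -> w <> [] -> red w -> exists B, R B /\ exists beta : T -> B, evw beta w <> gone.
Proof.
  induction n as [|n IHn]; intros T w Hl Hn Rw.
  { destruct w; [contradiction|simpl in Hl; lia]. }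
  destruct w as [|[c s0] w1]; [contradiction|].
  destruct (classic (exists x, In x ((c,s0)::w1) /\ fst x <> c)) as [Ex|Nx].
  2:{ assert (All : forall y, In y ((c,s0)::w1) -> y = (c,s0)).
      { apply all_same; [exact Rw|]. intros y Hy. simpl. apply NNPP. intro Ny. apply Nx. exists y; auto. }
      destruct (ord_any R RR (length ((c,s0)::w1))) as [B [RB [b Ob]]].
      exists B. split; [exact RB|]. exists (fun _ => if s0 then b else ginv b).
      rewrite (evw_const B _ b). { apply Ob. simpl. lia. }
      intros y Hy. rewrite (All y Hy). unfold sig_ev. simpl. destruct s0; [reflexivity|apply ginvK]. }
  set (w := (c,s0)::w1) in *.
  set (P := fun u : list (T * bool) => u <> [] /\ (forall x, In x u -> fst x <> c) /\
             exists a b, w = a ++ u ++ b).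
  destruct (sep_list R RR T P (infixes w)) as [Q [RQ [alpha Ha]]].
  { intros u _ [Nu [Cu [a [b Eu]]]]. apply (IHn T u); [|exact Nu|].
    - assert (length w = length a + length u + length b) by (rewrite Eu, !length_app; lia).
      destruct (Nat.eq_dec (length u) (length w)) as [E|E]; [|lia].
      exfalso. assert (a = []) by (destruct a; [reflexivity|simpl length in *; lia]).
      assert (b = []) by (destruct b; [reflexivity|simpl length in *; lia]). subst a b.
      rewrite app_nil_r in Eu. simpl in Eu. apply (Cu (c,s0)); [rewrite <- Eu; left; reflexivity|reflexivity].
    - rewrite Eu in Rw. apply red_app_l in Rw. apply red_app_r in Rw. exact Rw. }
  assert (Sep : forall a u b, w = a ++ u ++ b -> u <> [] -> (forall x, In x u -> fst x <> c) ->
                 evw alpha u <> gone).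
  { intros a u b E Nu Cu. apply Ha. - rewrite E. apply in_infixes. - split; [|split]; eauto. }
  set (w' := walk Q gone (map (tr T c Q alpha) w)).
  destruct (walk_red T c Q alpha w gone Rw Sep) as [Rw' _].
  destruct (walk_len T c Q alpha w gone) as [_ Lw'].
  destruct (IHn Q w') as [B [RB [beta' Hb]]].
  - specialize (Lw' Ex). unfold w'. lia.
  - unfold w', w. simpl. rewrite tr_c by reflexivity. simpl. discriminate.
  - exact Rw'.
  - set (sigma := fun y : Q => beta' (ginv y)).
    exists (WR B Q). split; [apply root_wr; auto|].
    exists (fun l => if excluded_middle_informative (l = c) then ssig B Q sigma
               else ((fun _ => gone), alpha l) : WR B Q).
    rewrite evK_tr. intro E. apply Hb.
    apply (f_equal (fun p => fst p gone)) in E. rewrite evK_fst1 in E. simpl in E.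
    rewrite <- E. apply evw_ext. intro q. unfold sigma. rewrite gmul1r, ginvK. reflexivity.
Qed.


Section HNN.
Variables (A : group) (H : A -> Prop) (G : group) (i : A -> G) (t : G).
Hypothesis HH : is_subgroup A H.
Hypothesis Hi : is_hom A G i.
Hypothesis Ht : forall h, H h -> gmul (gmul (ginv t) (i h)) t = i h.

Definition tpow (s : bool) : G := if s then t else ginv t.
Definition evG1 (x : A + bool) : G := match x with inl a => i a | inr s => tpow s end.
Definition evG (l : list (A + bool)) : G := fold_right (fun x acc => gmul (evG1 x) acc) gone l.
Fixpoint evL (l : list (bool * A)) : G :=
  match l with [] => gone | (s, a) :: r => gmul (tpow s) (gmul (i a) (evL r)) end.
Definition evH a0 l := gmul (i a0) (evL l).

Fixpoint norm (l : list (A + bool)) : A * list (bool * A) :=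
  match l with
  | [] => (gone, [])
  | inl a :: r => (gmul a (fst (norm r)), snd (norm r))
  | inr s :: r => (gone, (s, fst (norm r)) :: snd (norm r))
  end.
Lemma norm_ev l : evH (fst (norm l)) (snd (norm l)) = evG l.
Proof.
  unfold evH. induction l as [|[a|s] r IH]; simpl.
  - rewrite (hom1 _ _ _ Hi). apply gmul1l.
  - rewrite Hi, <- gmulA, IH. reflexivity.
  - rewrite (hom1 _ _ _ Hi), gmul1l, IH. reflexivity.
Qed.

Lemma evG_app l m : evG (l ++ m) = gmul (evG l) (evG m).
Proof. induction l; simpl. - rewrite gmul1l; reflexivity. - rewrite IHl, gmulA; reflexivity. Qed.

Definition invs (x : A + bool) : A + bool := match x with inl a => inl (ginv a) | inr s => inr (negb s) end.
Lemma evG_inv l : evG (map invs (rev l)) = ginv (evG l).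
Proof.
  induction l as [|x l IH]; simpl.
  - symmetry; apply ginv1.
  - rewrite map_app, evG_app, IH, ginvM. simpl. rewrite gmul1r. f_equal.
    destruct x as [a|[|]]; simpl. + apply (homV _ _ _ Hi). + reflexivity. + symmetry; apply ginvK.
Qed.

Hypothesis UP : forall (K : group) (f : A -> K) (s : K),
     is_hom A K f -> (forall h, H h -> gmul (gmul (ginv s) (f h)) s = f h) ->
     exists phi : G -> K, is_hom G K phi /\ (forall a, phi (i a) = f a) /\ phi t = s.
Hypothesis UQ : forall (K : group) (phi psi : G -> K), is_hom G K phi -> is_hom G K psi ->
     (forall a, phi (i a) = psi (i a)) -> phi t = psi t -> forall g, phi g = psi g.

Lemma generation : forall g, exists l, evG l = g.
Proof.
  set (S := fun g => exists l, evG l = g).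
  assert (HS : is_subgroup G S).
  { split; [|split].
    - exists []. reflexivity.
    - intros x y [l <-] [m <-]. exists (l ++ m). apply evG_app.
    - intros x [l <-]. exists (map invs (rev l)). apply evG_inv. }
  destruct (UP (sub_group G S HS) (fun a => exist S (i a) (ex_intro _ [inl a] (gmul1r _ _)))
             (exist S t (ex_intro _ [inr true] (gmul1r _ _)))) as [phi [Hp [Hpi Hpt]]].
  - intros x y. apply subset_eq_compat. apply Hi.
  - intros h Hh. apply subset_eq_compat. apply Ht, Hh.
  - intros g. assert (E := UQ G (fun g => proj1_sig (phi g)) (fun g => g)).
    assert (E' : proj1_sig (phi g) = g).
    { apply E.
      + intros x y. rewrite Hp. reflexivity.
      + intros x y. reflexivity.
      + intros a. rewrite Hpi. reflexivity.
      + rewrite Hpt. reflexivity. }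
    rewrite <- E'. apply proj2_sig.
Qed.

Fixpoint hredA (l : list (bool * A)) : Prop :=
  match l with
  | (s, a) :: (((s', _) :: _) as r) => (s' = negb s -> ~ H a) /\ hredA r
  | _ => True
  end.

Lemma pinch s a : H a -> gmul (gmul (tpow s) (i a)) (tpow (negb s)) = i a.
Proof.
  intro Ha. destruct s; simpl.
  - rewrite <- (Ht a Ha) at 1. rewrite !gmulA, gmulV, gmul1l, <- gmulA, gmulV, gmul1r. reflexivity.
  - apply Ht, Ha.
Qed.

Lemma reduce_step : forall l a0, hredA l \/
  exists a0' l', length l' < length l /\ evH a0' l' = evH a0 l.
Proof.
  induction l as [|[s a] r IH]; intros a0.
  - left. exact I.
  - destruct r as [|[s' b] r'].
    + left. exact I.
    + destruct (classic (s' = negb s /\ H a)) as [[Es Ha]|Np].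
      * right. exists (gmul (gmul a0 a) b), r'. split; [simpl; lia|].
        unfold evH. simpl. subst s'. rewrite !Hi.
        rewrite (gmulA _ (i a) (tpow (negb s))), (gmulA _ (tpow s) (gmul (i a) (tpow (negb s)))), (gmulA _ (tpow s) (i a)), pinch by exact Ha.
        rewrite !gmulA. reflexivity.
      * destruct (IH a) as [Hr|[a' [l' [Ll El]]]].
        -- left. split; [|exact Hr]. intros Es Ha. apply Np. auto.
        -- right. exists a0, ((s, a') :: l'). split; [simpl in *; lia|].
           unfold evH in *. simpl. rewrite El. reflexivity.
Qed.

Lemma reduce : forall n l a0, length l <= n -> exists a0' l', hredA l' /\ evH a0' l' = evH a0 l.
Proof.
  induction n as [|n IHn]; intros l a0 Hl.
  - destruct l; [|simpl in Hl; lia]. exists a0, []. split; [exact I|reflexivity].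
  - destruct (reduce_step l a0) as [Hr|[a' [l' [Ll El]]]].
    + exists a0, l. auto.
    + destruct (IHn l' a') as [a'' [l'' [R'' E'']]]; [lia|]. exists a'', l''. split; [exact R''|].
      rewrite E''. exact El.
Qed.
End HNN.


Section Rep.
Variables (X : group) (Y : X -> Prop) (HY : is_subgroup X Y).
Definition rep (x : X) : X := epsilon (inhabits gone) (fun r => exists y, Y y /\ r = gmul y x).
Lemma rep_spec x : exists y, Y y /\ rep x = gmul y x.
Proof. unfold rep. apply epsilon_spec.
  exists x, gone. split; [apply HY|symmetry; apply gmul1l]. Qed.
Lemma rep_inv y x : Y y -> rep (gmul y x) = rep x.
Proof.
  intro Yy. unfold rep. f_equal. apply functional_extensionality; intro r.
  apply propositional_extensionality. split.
  - intros [z [Yz ->]]. exists (gmul z y). split; [apply HY; auto|apply gmulA].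
  - intros [z [Yz ->]]. exists (gmul z (ginv y)). split; [apply HY; auto; apply HY; auto|].
    rewrite <- gmulA, (gmulA _ (ginv y)), gmulVl, gmul1l. reflexivity.
Qed.
Lemma rep_eq x x' : rep x = rep x' -> exists y, Y y /\ x' = gmul y x.
Proof.
  intro E. destruct (rep_spec x) as [y1 [Y1 E1]]. destruct (rep_spec x') as [y2 [Y2 E2]].
  exists (gmul (ginv y2) y1). split; [apply HY; [apply HY; auto|auto]|].
  rewrite <- gmulA, <- E1, E, E2, gmulA, gmulVl, gmul1l. reflexivity.
Qed.
End Rep.

Lemma mul_cancel_r (G : group) (x y z : G) : gmul x z = gmul y z -> x = y.
Proof. intro E. rewrite <- (gmul1r _ x), <- (gmul1r _ y), <- (gmulV _ z), !gmulA, E. reflexivity. Qed.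

Section Conv.
Variables (A : group) (H : A -> Prop) (X : group) (psi : A -> X).
Hypothesis HH : is_subgroup A H.
Hypothesis Hpsi : is_hom A X psi.
Definition Yp : X -> Prop := fun x => exists h, H h /\ psi h = x.
Lemma Yp_sub : is_subgroup X Yp.
Proof. split; [|split].
  - exists gone. split; [apply HH|apply (hom1 _ _ _ Hpsi)].
  - intros x y [h [Hh <-]] [k [Hk <-]]. exists (gmul h k). split; [apply HH; auto|apply Hpsi].
  - intros x [h [Hh <-]]. exists (ginv h). split; [apply HH; auto|apply (homV _ _ _ Hpsi)].
Qed.

Fixpoint walkH (p : X) (l : list (bool * A)) : list (X * bool) :=
  match l with [] => [] | (s, a) :: r => (p, s) :: walkH (gmul p (psi a)) r end.
Fixpoint trH (l : list (bool * A)) : list (gen X) :=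
  match l with [] => [] | (s, a) :: r => GS s :: GQ (psi a) :: trH r end.
Lemma walk_trH l p : walk X p (trH l) = walkH p l.
Proof. revert p; induction l as [|[s a] r IH]; intro p; simpl; [reflexivity|]. rewrite IH. reflexivity. Qed.

Definition letters (w : list (X * bool)) : list (X * bool) :=
  map (fun q => (rep X Yp (ginv (fst q)), snd q)) w.

Lemma walkH_red : forall l p, hredA A H l ->
  (forall a, In a (map snd l) -> ~ H a -> ~ Yp (psi a)) -> red (letters (walkH p l)).
Proof.
  induction l as [|[s a] r IH]; intros p Hr Hg; [exact I|].
  destruct r as [|[s' b] r']; [exact I|].
  simpl in Hr. destruct Hr as [Hn Hr].
  change (red ((rep X Yp (ginv p), s) :: letters (walkH (gmul p (psi a)) ((s', b) :: r')))).
  simpl walkH. simpl letters. simpl fst. simpl snd.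
  split.
  - intros [Cr Cs]. simpl in Cr, Cs. specialize (Hn Cs).
    apply (Hg a); [left; reflexivity|exact Hn|].
    destruct (rep_eq X Yp Yp_sub _ _ Cr) as [y [Yy Ey]].
    rewrite ginvM in Ey. apply mul_cancel_r in Ey.
    rewrite <- (ginvK _ (psi a)), Ey. apply Yp_sub. exact Yy.
  - apply (IH (gmul p (psi a)) Hr). intros a' Ha'. apply Hg. right. exact Ha'.
Qed.
End Conv.


Definition Good (A : group) (H : A -> Prop) (X : group) (psi : A -> X) (a : A) : Prop :=
  (~ H a -> ~ Yp A H X psi (psi a)) /\ (a <> gone -> psi a <> gone).

Lemma good_pair_l (A : group) (H : A -> Prop) (X1 X2 : group) (p1 : A -> X1) (p2 : A -> X2) a :
  Good A H X1 p1 a -> @Good A H (prod_group X1 X2) (fun x => (p1 x, p2 x)) a.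
Proof. intros [G1 G2]. split.
  - intros Na [h [Hh E]]. injection E as E1 E2. apply (G1 Na). exists h. auto.
  - intros Na E. injection E as E1 E2. exact (G2 Na E1). Qed.
Lemma good_pair_r (A : group) (H : A -> Prop) (X1 X2 : group) (p1 : A -> X1) (p2 : A -> X2) a :
  Good A H X2 p2 a -> @Good A H (prod_group X1 X2) (fun x => (p1 x, p2 x)) a.
Proof. intros [G1 G2]. split.
  - intros Na [h [Hh E]]. injection E as E1 E2. apply (G1 Na). exists h. auto.
  - intros Na E. injection E as E1 E2. exact (G2 Na E2). Qed.
Lemma pair_hom (A X1 X2 : group) (p1 : A -> X1) (p2 : A -> X2) :
  is_hom A X1 p1 -> is_hom A X2 p2 -> is_hom A (prod_group X1 X2) (fun x => (p1 x, p2 x)).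
Proof. intros H1 H2 x y. simpl. unfold prod_mul. simpl. rewrite H1, H2. reflexivity. Qed.

Section Conv2.
Variables (C R : gclass) (A : group) (H : A -> Prop).
Hypothesis HH : is_subgroup A H.
Hypothesis RR : root_class R.
Hypothesis RC : forall X, R X -> C X.
Hypothesis PC : product_closed C.
Hypothesis RA : residually C A.
Hypothesis CL : pro_closed C A H.

Lemma someC : exists X, C X.
Proof. destruct RR as [[B [RB _]] _]. exists B. auto. Qed.

Lemma good_exists a : exists X psi, C X /\ is_hom A X psi /\ Good A H X psi a.
Proof.
  assert (P1 : exists X psi, C X /\ is_hom A X psi /\ (~ H a -> ~ Yp A H X psi (psi a))).
  { destruct (classic (H a)) as [Ha|Na].
    - destruct someC as [X CX]. exists X, (fun _ => gone). split; [auto|split; [|tauto]].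
      intros x y. symmetry. apply gmul1l.
    - assert (Nc : ~ (forall N, is_normal A N -> quotient_in C A N ->
                      exists h n, H h /\ N n /\ a = gmul h n)) by (intro F; exact (Na (CL a F))).
      apply not_all_ex_not in Nc. destruct Nc as [N Nc].
      apply imply_to_and in Nc. destruct Nc as [NN Nc].
      apply imply_to_and in Nc. destruct Nc as [[Q [f [CQ [Hf [Sf Kf]]]]] Nc].
      exists Q, f. split; [exact CQ|split; [exact Hf|]]. intros _ [h [Hh E]].
      apply Nc. exists h, (gmul (ginv h) a). split; [exact Hh|split].
      + apply Kf. rewrite Hf, (homV _ _ _ Hf), E. apply gmulVl.
      + rewrite gmulA, gmulV, gmul1l. reflexivity. }
  assert (P2 : exists X psi, C X /\ is_hom A X psi /\ (a <> gone -> psi a <> gone)).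
  { destruct (classic (a = gone)) as [Ea|Na].
    - destruct someC as [X CX]. exists X, (fun _ => gone). split; [auto|split; [|tauto]].
      intros x y. symmetry. apply gmul1l.
    - destruct (RA a Na) as [K [f [CK [Hf [_ Nf]]]]]. exists K, f. auto. }
  destruct P1 as [X1 [p1 [C1 [H1 G1]]]]. destruct P2 as [X2 [p2 [C2 [H2 G2]]]].
  exists (prod_group X1 X2), (fun x => (p1 x, p2 x)). split; [apply PC; auto|split; [apply pair_hom; auto|]].
  split.
  - intros Na [h [Hh E]]. injection E as E1 E2. apply (G1 Na). exists h. auto.
  - intros Na E. injection E as E1 E2. exact (G2 Na E2).
Qed.

Lemma good_list (L : list A) : exists X psi, C X /\ is_hom A X psi /\ forall a, In a L -> Good A H X psi a.
Proof.
  induction L as [|a L IH].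
  - destruct someC as [X CX]. exists X, (fun _ => gone). split; [auto|split; [|intros a []]].
    intros x y. symmetry. apply gmul1l.
  - destruct IH as [X1 [p1 [C1 [H1 G1]]]]. destruct (good_exists a) as [X2 [p2 [C2 [H2 G2]]]].
    exists (prod_group X1 X2), (fun x => (p1 x, p2 x)). split; [apply PC; auto|split; [apply pair_hom; auto|]].
    intros b [<-|Hb].
    + apply good_pair_r. exact G2.
    + apply good_pair_l. apply G1. exact Hb.
Qed.
End Conv2.


Lemma evw_map {T U} (B : group) (beta : U -> B) (h : T -> U) w :
  evw beta (map (fun q => (h (fst q), snd q)) w) = evw (fun q => beta (h q)) w.
Proof. induction w as [|[x s] w IH]; simpl; [reflexivity|]. rewrite IH. reflexivity. Qed.

Lemma converse (C R : gclass) (A : group) (H : A -> Prop) (G : group) (i : A -> G) (t : G) :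
  is_subgroup A H ->
  is_special_HNN A H G i t ->
  root_class R ->
  (forall X, R X -> C X) ->
  subgroup_closed C ->
  product_closed C ->
  (forall X, by_class R C X -> C X) ->
  (forall X, C X -> exists Y, R Y /\ same_card X Y) ->
  residually C A -> pro_closed C A H -> residually C G.
Proof.
  intros HH [Hi [Ht [UP UQ]]] RR RC SC PC BC CARD RA CL g Ng.
  destruct (generation A H G i t Hi Ht UP UQ g) as [w Ew].
  rewrite <- norm_ev in Ew by exact Hi.
  destruct (reduce A H G i t Hi Ht (length (snd (norm A w))) _ (fst (norm A w)) (le_n _))
    as [a1 [l [Rl El]]].
  rewrite Ew in El. clear Ew w.
  destruct (good_list C R A H RR RC PC RA CL (a1 :: map snd l)) as [X [psi [CX [Hpsi Gd]]]].
  set (Y := Yp A H X psi).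
  set (p0 := gmul gone (psi a1)).
  set (wl := letters A H X psi (walkH A X psi p0 l)).
  assert (HB : exists B, R B /\ exists beta : X -> B, l <> [] -> evw beta wl <> gone).
  { destruct l as [|[s a] r].
    - destruct RR as [[B [RB _]] _]. exists B. split; [exact RB|]. exists (fun _ => gone). congruence.
    - destruct (FL R RR (length wl) X wl (le_n _)) as [B [RB [beta Hb]]].
      + unfold wl. simpl. discriminate.
      + apply walkH_red; [exact HH|exact Hpsi|exact Rl|].
        intros a0 Ha. apply (Gd a0). right. exact Ha.
      + exists B. split; [exact RB|]. exists beta. intros _. exact Hb. }
  destruct HB as [B [RB [beta Hb]]].
  set (sigma := fun y => beta (rep X Y y)).
  assert (CK : C (WR B X)) by (apply (wr_in_C C R); auto).
  destruct (UP (WR B X) (fun a => ((fun _ => gone), psi a) : WR B X) (ssig B X sigma)) as [phi [Hphi [Hpi Hpt]]].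
  { intros x y. simpl. unfold WRmul. simpl. rewrite Hpsi. f_equal.
    apply functional_extensionality; intro; symmetry; apply gmul1l. }
  { intros h Hh. simpl. unfold WRmul, WRinv, ssig. simpl. rewrite !ginv1, !gmul1l, !gmul1r. f_equal.
    apply functional_extensionality; intro x. unfold sigma. rewrite gmul1r, gmul1l.
    rewrite (rep_inv X Y (Yp_sub A H X psi HH Hpsi) (ginv (psi h)) x); [apply gmulVl|].
    apply (Yp_sub A H X psi HH Hpsi). exists h. auto. }
  assert (PevL : forall l, phi (evL A G i t l) = evK B X sigma (trH A X psi l)).
  { induction l0 as [|[s a] r IH]; simpl.
    - apply (hom1 _ _ _ Hphi).
    - rewrite !Hphi, IH, Hpi. destruct s; simpl.
      + rewrite Hpt. reflexivity.
      + rewrite (homV _ _ _ Hphi), Hpt. reflexivity. }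
  assert (Pg : phi g = evK B X sigma (GQ (psi a1) :: trH A X psi l)).
  { rewrite <- El. unfold evH. rewrite Hphi, Hpi, PevL, evK_cons. reflexivity. }
  destruct (image_in C G (WR B X) phi Hphi SC CK) as [Q' [q [CQ [Hq [Sq Kq]]]]].
  exists Q', q. split; [exact CQ|split; [exact Hq|split; [exact Sq|]]].
  intro E. apply Kq in E. rewrite Pg in E.
  destruct l as [|[s a] r].
  - apply (f_equal snd) in E. simpl in E. rewrite gmul1r in E.
    apply (proj2 (Gd a1 (or_introl eq_refl))); [|exact E].
    intro Ea. apply Ng. rewrite <- El. unfold evH. simpl. rewrite Ea, (hom1 _ _ _ Hi). apply gmul1r.
  - apply Hb; [discriminate|].
    apply (f_equal (fun p => fst p gone)) in E. rewrite evK_fst1 in E. simpl walk in E.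
    rewrite walk_trH in E. etransitivity; [|exact E].
    unfold wl, letters. rewrite (evw_map B beta (fun x => rep X Y (ginv x))). apply evw_ext. intro q0. unfold sigma. rewrite gmul1r. reflexivity.
Qed.


Theorem theorem1p7 (C R : gclass) (A : group) (H : A -> Prop) (G : group)
  (i : A -> G) (t : G) :
  is_subgroup A H ->
  is_special_HNN A H G i t ->
  iso_closed C ->
  root_class R ->
  (forall X, R X -> C X) ->
  subgroup_closed C ->
  product_closed C ->
  (forall X, by_class R C X -> C X) ->
  (forall X, C X -> exists Y, R Y /\ same_card X Y) ->
  (residually C G <-> residually C A /\ pro_closed C A H).
Proof.
  intros HH HN IC RR RC SC PC BC CARD. split.
  - intro RG. exact (forward C A H G i t HH HN SC RG).
  - intros [RA CL]. exact (converse C R A H G i t HH HN RR RC SC PC BC CARD RA CL).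
Qed.
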